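(* Let an FCA with state set $S$, neighborhood $m=l+1+r$, local rule $f$ and boundary type $b\in\{\text{null},\text{periodic}\}$ be given, let $G$ be its reversibility graph and $\mathrm{CG}$ its circuit graph. Let $N$ be a negative vertex of $G$ with value $k\ge1$, let $C_1,\dots,C_t$ be distinct circuits of $G$ with lengths $r_1,\dots,r_t$, and let $x_1,\dots,x_t\ge 0$ be integers such that for every $j$ with $x_j>0$ there is a path in $\mathrm{CG}$ from $C_j$ to $N$ all of whose vertices other than $N$ are circuits $C_{j'}$ with $x_{j'}>0$. Then the FCA is not $(k+x_1r_1+\dots+x_tr_t)$-cell-reversible.
   Context: A one-dimensional finite cellular automaton (FCA) is given by a state set $S=\{0,1,\dots,s-1\}$, integers $l,r\ge 0$ with neighborhood size $m=l+1+r\ge 2$, a local rule $f:S^m\to S$, and a boundary type $b\in\{\text{null},\text{periodic}\}$. For $n\ge 1$ the global map $\tau_n:S^n\to S^n$ sends $(x_0,\dots,x_{n-1})$ to $(y_0,\dots,y_{n-1})$ with $y_i=f(x_{i-l},\dots,x_{i+r})$, where for the null boundary $x_j=0$ whenever $j<0$ or $j>n-1$, and for the periodic boundary indices are taken modulo $n$. The FCA is $n$-cell-reversible if $\tau_n$ is a bijection (equivalently, since $S^n$ is finite, surjective). Reversibility graph (RG). Null boundary: vertices are subsets of $S^{m-1}$; the root is $N_0=\{(a_1,\dots,a_{m-1})\in S^{m-1}: a_1=\dots=a_l=0\}$; the acceptance set is $R=\{(a_1,\dots,a_{m-1})\in S^{m-1}: a_{m-r}=\dots=a_{m-1}=0\}$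 (so $R=S^{m-1}$ if $r=0$); for a subset $N$ and $c\in S$, $\delta(N,c)=\{(a_1,\dots,a_{m-1})\in S^{m-1}:\exists a_0\in S,\ (a_0,\dots,a_{m-2})\in N,\ f(a_0,a_1,\dots,a_{m-1})=c\}$. Periodic boundary: vertices are subsets of $S^{m-1}\times S^{m-1}$; the root and the acceptance set are $N_0=R=\{(a,a):a\in S^{m-1}\}$; $\delta(N,c)=\{((a_1,\dots,a_{m-1}),(b_1,\dots,b_{m-1})):\exists b_0\in S,\ ((a_1,\dots,a_{m-1}),(b_0,\dots,b_{m-2}))\in N,\ f(b_0,\dots,b_{m-1})=c\}$. In both cases the RG is the directed graph whose vertex set consists of all subsets obtainable from $N_0$ by repeatedly applying $\delta$ (including $N_0$; equal subsets are the same vertex; the empty set may occur), with, for each vertex $N$ and each $c\in S$, an edge labelled $c$ from $N$ to $\delta(N,c)$. The value of a vertex $N$ is the length of a shortest directed path from $N_0$ to $N$. A vertex $N$ is negative if $N\cap R=\emptyset$. A circuit is an elementary directed cycle of the RG (a closed directed path with no repeated vertex other than its start = end; a loop is a circuit of length $1$); its length is its number of edges, and it passes through $N$ if $N$ is one of its vertices. Circuit graph (CG): the undirected graph whose vertices are all negative vertices and all circuits of the RG; two circuits are joined by an edge if they have at least one RG-vertex in common; a circuit $D$ and a negative vertex $N$ are joined by an edge if $D$ passes through $N$; there are no other edges. *)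

(* Defs.v *)
From HB Require Import structures.
From mathcomp Require Import all_boot all_order all_algebra.
Set Implicit Arguments. Unset Strict Implicit. Unset Printing Implicit Defensive.

Inductive boundary := NullB | PeriodicB.

(* A "reversibility-graph-like" automaton: vertices are subsets of a finite
   type X, with a root N0, an acceptance set R and a transition delta. *)
Record RGdata (S : Type) := RGData {
  rgX : finType;
  rgroot : {set rgX};
  rgacc : {set rgX};
  rgdelta : {set rgX} -> S -> {set rgX} }.

Section FCA.
(* State set S = {0,...,s1}, i.e. s = s1 + 1 states. *)
Variables (s1 l r : nat).
Local Notation S := 'I_s1.+1.
Local Notation st0 := (ord0 : S).
(* local rule f : S^m -> S with m = l + 1 + r, so m - 1 = l + r *)
Variable f : (l + r).+1.-tuple S -> S.

(* neighbourhood (x_{i-l}, ..., x_{i+r}) of cell i, null boundary: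
   pad x with l zeros on the left and r zeros on the right *)
Definition nbhd_null n (x : n.-tuple S) (i : nat) : (l + r).+1.-tuple S :=
  [tuple nth st0 (nseq l st0 ++ x ++ nseq r st0) (i + p) | p < (l + r).+1].

Definition nbhd_per n (x : n.-tuple S) (i : nat) : (l + r).+1.-tuple S :=
  [tuple nth st0 x (absz ((i%:Z + (p : nat)%:Z - l%:Z) %% n%:Z)%Z) | p < (l + r).+1].

Definition nbhd (b : boundary) n (x : n.-tuple S) (i : nat) :=
  match b with NullB => nbhd_null x i | PeriodicB => nbhd_per x i end.

Definition global_map (b : boundary) n (x : n.-tuple S) : n.-tuple S :=
  [tuple f (nbhd b x i) | i < n].

Definition reversible (b : boundary) (n : nat) : Prop := bijective (@global_map b n).

Definition RG_null : RGdata S := @RGData S ((l + r).-tuple S)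
  [set a : (l + r).-tuple S | [forall i : 'I_(l + r), (i < l) ==> (tnth a i == st0)]]
  [set a : (l + r).-tuple S | [forall i : 'I_(l + r), (l <= i) ==> (tnth a i == st0)]]
  (fun N c => [set a : (l + r).-tuple S |
     [exists a0 : S, [exists q in N, val q == belast a0 a] && (f (cons_tuple a0 a) == c)]]).

Definition RG_per : RGdata S := @RGData S ((l + r).-tuple S * (l + r).-tuple S)%type
  [set p : ((l + r).-tuple S * (l + r).-tuple S)%type | p.1 == p.2]
  [set p : ((l + r).-tuple S * (l + r).-tuple S)%type | p.1 == p.2]
  (fun N c => [set p : ((l + r).-tuple S * (l + r).-tuple S)%type |
     [exists b0 : S, [exists q in N, (q.1 == p.1) && (val q.2 == belast b0 p.2)]
                     && (f (cons_tuple b0 p.2) == c)]]).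

Definition RG (b : boundary) : RGdata S :=
  match b with NullB => RG_null | PeriodicB => RG_per end.

End FCA.

Section Graph.
Variables (S : finType) (G : RGdata S).
Local Notation V := {set rgX G}.

Definition run (w : seq S) : V := foldl (@rgdelta S G) (rgroot G) w.

Definition is_vertex (N : V) : Prop := exists w : seq S, run w = N.

Definition has_value (N : V) (k : nat) : Prop :=
  (exists w : seq S, size w = k /\ run w = N) /\
  (forall w : seq S, run w = N -> k <= size w).

Definition negative (N : V) : Prop := N :&: rgacc G = set0.

(* a circuit, given by its (vertex, outgoing edge label) pairs in order,
   starting at some vertex: closed directed path without repeated vertex *)
Definition is_circuit (C : seq (V * S)) : Prop :=
  [/\ C != [::],
      {in map fst C, forall v, is_vertex v},
      uniq (map fst C) &
      cycle (fun u v : V * S => rgdelta u.1 u.2 == v.1) C].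

(* two rooted representations denote the same circuit iff one is a rotation
   of the other *)
Definition same_circuit (C D : seq (V * S)) : Prop := exists i, rot i C = D.

Definition passes_through (C : seq (V * S)) (N : V) : bool := N \in map fst C.

Definition circ_adj (C D : seq (V * S)) : bool :=
  has (fun v => v \in map fst D) (map fst C).

End Graph.

(* Main.v *)
Require Import Defs.
From HB Require Import structures.
From mathcomp Require Import all_boot all_order all_algebra.
From mathcomp Require Import zify.
Set Implicit Arguments. Unset Strict Implicit. Unset Printing Implicit Defensive.

Section Comb.
Variables (S : finType) (G : RGdata S).
Local Notation V := {set rgX G}.
Local Notation d := (@rgdelta S G).

Definition vis (v : V) (u : seq S) (w : V) :=
  exists i, i <= size u /\ foldl d v (take i u) = w.

Lemma path_walk (x : V * S) (s : seq (V * S)) :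
  path (fun a b : V * S => d a.1 a.2 == b.1) x s ->
  foldl d x.1 (map snd (belast x s)) = (last x s).1 /\
  forall y, y \in x :: s -> exists i, i <= size s /\
     foldl d x.1 (take i (map snd (belast x s))) = y.1.
Proof.
elim: s x => [|z s IH] x /=.
  move=> _; split=> // y; rewrite inE => /eqP ->; by exists 0.
case/andP=> /eqP exz /IH [h1 h2]; rewrite exz; split=> // y.
rewrite inE; case/orP=> [/eqP ->|/h2 [i [hi hy]]]; first by exists 0.
by exists i.+1; split=> //=; rewrite exz.
Qed.

Lemma circ_walk (C : seq (V * S)) :
  cycle (fun a b : V * S => d a.1 a.2 == b.1) C -> forall v, v \in map fst C ->
  exists c, [/\ size c = size C, foldl d v c = v &
     forall w, w \in map fst C -> vis v c w].
Proof.
move=> cyc v /mapP [p pC ->].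
case: (rot_to pC) => i s' e.
have cyc' : cycle (fun a b : V * S => d a.1 a.2 == b.1) (p :: s').
  by rewrite -e rot_cycle.
move: cyc'; rewrite /= => /path_walk; rewrite belast_rcons last_rcons => [[h1 h2]].
exists (map snd (p :: s')); split=> //.
  by rewrite size_map -e size_rot.
move=> w; rewrite -(mem_rot i) -map_rot e => /mapP [y yin ->].
have yin' : y \in p :: rcons s' p.
  by move: yin; rewrite !inE mem_rcons inE => /orP [->|->]; rewrite ?orbT.
have [j [hj hy]] := h2 y yin'.
by exists j; split=> //; rewrite size_map /=; move: hj; rewrite size_rcons.
Qed.

Lemma insert_walk (N v : V) (u c : seq S) :
  foldl d N u = N -> vis N u v -> foldl d v c = v ->
  exists u', [/\ foldl d N u' = N, size u' = size u + size c,
     (forall w, vis N u w -> vis N u' w) & (forall w, vis v c w -> vis N u' w)].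
Proof.
move=> hu [i0 [hi0 hv]] hc.
have szt : size (take i0 u) = i0 by rewrite size_take_min; lia.
exists (take i0 u ++ c ++ drop i0 u); split.
- by rewrite !foldl_cat hv hc -hv -foldl_cat cat_take_drop.
- by rewrite !size_cat szt size_drop; lia.
- move=> w [i [hi hw]].
  case: (leqP i i0) => hii0.
    exists i; split; first by rewrite !size_cat size_drop; lia.
    by rewrite takel_cat ?szt // take_takel.
  exists (i + size c); split; first by rewrite !size_cat size_drop; lia.
  have -> : i + size c = (i0 + size c) + (i - i0) by lia.
  rewrite catA takeD take_size_cat; last by rewrite size_cat szt.
  rewrite drop_size_cat; last by rewrite size_cat szt.
  rewrite !foldl_cat hv hc -hw.
  by rewrite -[in RHS](subnKC (ltnW hii0)) takeD foldl_cat hv.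
- move=> w [j [hj hw]].
  exists (i0 + j); split; first by rewrite !size_cat size_drop; lia.
  rewrite takeD take_size_cat // drop_size_cat // takel_cat //.
  by rewrite foldl_cat hv.
Qed.

Lemma repeat_walk (v : V) (c : seq S) : foldl d v c = v -> forall n,
  exists cn, [/\ size cn = n * size c, foldl d v cn = v &
     0 < n -> forall w, vis v c w -> vis v cn w].
Proof.
move=> hc; elim=> [|n [cn [h1 h2 h3]]]; first by exists [::].
exists (c ++ cn); split.
- by rewrite size_cat h1 mulSn.
- by rewrite foldl_cat hc.
- move=> _ w [j [hj hw]]; exists j; split; first by rewrite size_cat; lia.
  by rewrite takel_cat.
Qed.

Section Main.
Variables (N : V) (t : nat) (C : 'I_t -> seq (V * S)) (x : 'I_t -> nat).
Hypothesis hcyc : forall j, cycle (fun a b : V * S => d a.1 a.2 == b.1) (C j).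
Hypothesis hconn : forall j, 0 < x j ->
     exists p : seq 'I_t,
       [/\ path (fun i i' => circ_adj (C i) (C i')) j p,
           all (fun i => 0 < x i) (j :: p) &
           passes_through (C (last j p)) N].

Definition Inv (y : 'I_t -> nat) :=
  (forall j, y j = 0 \/ y j = x j) /\
  exists u, [/\ foldl d N u = N, size u = \sum_(j < t) y j * size (C j) &
     forall j, 0 < y j -> forall w, w \in map fst (C j) -> vis N u w].

Lemma find_next (y : 'I_t -> nat) : (forall j, y j = 0 \/ y j = x j) ->
  forall p j0, path (fun i i' => circ_adj (C i) (C i')) j0 p ->
  all (fun i => 0 < x i) (j0 :: p) -> passes_through (C (last j0 p)) N ->
  y j0 = 0 ->
  exists j', [/\ 0 < x j', y j' = 0 &
     passes_through (C j') N \/ exists i, 0 < y i /\ circ_adj (C j') (C i)].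
Proof.
move=> hy; elim=> [|i p IH] j0 /=.
  by move=> _ /andP [xj0 _] hp yj0; exists j0; split=> //; left.
case/andP=> adj hpath /andP [xj0 hall] hp yj0.
case: (hy i) => [yi0|yix].
  by apply: (IH i hpath hall hp yi0).
exists j0; split=> //; right; exists i; split=> //.
by rewrite yix; case/andP: hall.
Qed.

Definition Pz (y : 'I_t -> nat) := [pred j | (0 < x j) && (y j == 0)].

Lemma step (y : 'I_t -> nat) j0 : Inv y -> 0 < x j0 -> y j0 = 0 ->
  exists y', Inv y' /\ #|Pz y'| < #|Pz y|.
Proof.
move=> [hy [u [hu1 hu2 hu3]]] xj0 yj0.
have [p [hp1 hp2 hp3]] := hconn xj0.
have [j' [xj' yj' hj']] := find_next hy hp1 hp2 hp3 yj0.
have [v [vin vvis]] : exists v, v \in map fst (C j') /\ vis N u v.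
  case: hj' => [hpass|[i [yi /hasP [v vin vin']]]].
    by exists N; split; [exact: hpass | exists 0; rewrite take0].
  by exists v; split=> //; apply: hu3 vin'.
have [c [hc1 hc2 hc3]] := circ_walk (hcyc j') vin.
have [cn [hn1 hn2 hn3]] := repeat_walk hc2 (x j').
have [u' [h1 h2 h3 h4]] := insert_walk hu1 vvis hn2.
pose y' := fun i => if i == j' then x j' else y i.
exists y'; split; first split.
- by move=> i; rewrite /y'; case: eqP => [->|_]; [right|apply: hy].
- exists u'; split=> //.
    rewrite h2 hu2 hn1 hc1 [in RHS](bigD1 j') //= (bigD1 j') //= yj' mul0n add0n.
    rewrite /y' eqxx addnC; congr (_ + _); apply: eq_bigr => i /negbTE -> //.
  move=> i; rewrite /y'; case: eqP => [->|_] hpos w win.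
    by apply: h4; apply: (hn3 hpos); apply: hc3.
  by apply: h3; apply: hu3 win.
- apply: proper_card; apply/properP; split.
    apply/subsetP => i; rewrite /Pz !inE /y'.
    case: (eqVneq i j') => [->|//].
    by move=> /andP [_ /eqP e]; move: xj'; rewrite e.
  by exists j'; rewrite /Pz !inE /y' ?eqxx ?yj' ?xj' //= -lt0n.
Qed.

Lemma closed_walk : exists u, foldl d N u = N /\ size u = \sum_(j < t) x j * size (C j).
Proof.
suff main : forall m y, #|Pz y| <= m -> Inv y ->
    exists u, foldl d N u = N /\ size u = \sum_(j < t) x j * size (C j).
  apply: (main #|Pz (fun _ => 0)| (fun _ => 0)) => //.
  split; first by left.
  exists [::]; split=> //; first by rewrite big1.
elim=> [|m IH] y hm hinv.
  case: (pickP (Pz y)) => [j0 hj0|none].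
    have : 0 < #|Pz y| by apply/card_gt0P; exists j0.
    by rewrite leqn0 in hm; rewrite (eqP hm).
  case: hinv => hy [u [hu1 hu2 _]]; exists u; split=> //; rewrite hu2.
  apply: eq_bigr => j _; congr (_ * _).
  case: (hy j) => // yj0; move: (none j); rewrite /= yj0 eqxx andbT.
  by case: (x j).
case: (pickP (Pz y)) => [j0 /andP [xj0 /eqP yj0]|none].
  have [y' [hinv' hlt]] := step hinv xj0 yj0.
  by apply: (IH y') => //; lia.
case: hinv => hy [u [hu1 hu2 _]]; exists u; split=> //; rewrite hu2.
apply: eq_bigr => j _; congr (_ * _).
case: (hy j) => // yj0; move: (none j); rewrite /= yj0 eqxx andbT.
by case: (x j).
Qed.
End Main.
End Comb.
Lemma val_mkt (T : Type) n (F : nat -> T) :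
  val [tuple F (nat_of_ord i) | i < n] = map F (iota 0 n).
Proof. by rewrite /= -val_enum_ord -map_comp; apply: eq_map. Qed.

Lemma belast_iota m i : belast i (iota i.+1 m) = iota i m.
Proof. by elim: m i => [|m IH] i //=; rewrite IH. Qed.

Section Sem.
Variables (s1 l r : nat) (f : (l + r).+1.-tuple 'I_s1.+1 -> 'I_s1.+1).
Local Notation S := 'I_s1.+1.

Definition win (z : nat -> S) i : (l + r).-tuple S := [tuple z (i + p) | p < l + r].
Definition win1 (z : nat -> S) i : (l + r).+1.-tuple S :=
  [tuple z (i + p) | p < (l + r).+1].

Lemma val_win z i : val (win z i) = map z (iota i (l + r)).
Proof.
rewrite /win (val_mkt _ (fun p => z (i + p))).
by rewrite -[in RHS](addn0 i) iotaDl -map_comp.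
Qed.

Lemma val_win1 z i : val (win1 z i) = map z (iota i (l + r).+1).
Proof.
rewrite /win1 (val_mkt _ (fun p => z (i + p))).
by rewrite -[in RHS](addn0 i) iotaDl -map_comp.
Qed.

Lemma cons_win z i : cons_tuple (z i) (win z i.+1) = win1 z i.
Proof. apply: val_inj; rewrite val_win1. change (z i :: val (win z i.+1) = map z (iota i (l + r).+1)). by rewrite val_win. Qed.

Lemma belast_win z i : val (win z i) = belast (z i) (val (win z i.+1)).
Proof. by rewrite !val_win belast_map belast_iota. Qed.

Lemma run_null z : win z 0 \in rgroot (RG_null f) -> forall i,
  win z i \in foldl (@rgdelta _ (RG_null f)) (rgroot (RG_null f))
                (map (fun j => f (win1 z j)) (iota 0 i)).
Proof.
move=> h0; elim=> [|i IH] //.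
rewrite (_ : iota 0 i.+1 = iota 0 i ++ [:: i]); last by rewrite -addn1 iotaD.
rewrite map_cat foldl_cat /= inE.
apply/existsP; exists (z i); rewrite cons_win eqxx andbT.
by apply/existsP; exists (win z i); rewrite IH /=; apply/eqP; apply: belast_win.
Qed.

Lemma run_per z : forall i,
  (win z 0, win z i) \in foldl (@rgdelta _ (RG_per f)) (rgroot (RG_per f))
                (map (fun j => f (win1 z j)) (iota 0 i)).
Proof.
elim=> [|i IH]; first by rewrite /= inE.
rewrite (_ : iota 0 i.+1 = iota 0 i ++ [:: i]); last by rewrite -addn1 iotaD.
rewrite map_cat foldl_cat /= inE.
apply/existsP; exists (z i); rewrite cons_win eqxx andbT.
apply/existsP; exists (win z 0, win z i); rewrite IH /= eqxx /=.
by apply/eqP; apply: belast_win.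
Qed.

Lemma val_gm b n (x : n.-tuple S) :
  val (global_map f b x) = map (fun j => f (nbhd l r b x j)) (iota 0 n).
Proof. exact: (val_mkt _ (fun j => f (nbhd l r b x j))). Qed.

Lemma sem_null n (x : n.-tuple S) :
  run (RG f NullB) (val (global_map f NullB x)) :&: rgacc (RG f NullB) != set0.
Proof.
pose z := fun j => nth ord0 (nseq l ord0 ++ val x ++ nseq r ord0) j.
have -> : val (global_map f NullB x) = map (fun j => f (win1 z j)) (iota 0 n).
  by rewrite val_gm.
apply/set0Pn; exists (win z n); rewrite inE; apply/andP; split.
  apply: run_null; rewrite inE; apply/forallP => i; apply/implyP => hi.
  by rewrite tnth_mktuple /z add0n nth_cat size_nseq hi nth_nseq hi.
rewrite inE; apply/forallP => i; apply/implyP => hi.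
rewrite tnth_mktuple /z nth_cat size_nseq.
have h1 : (n + i < l) = false by apply/negbTE; rewrite -leqNgt; lia.
rewrite h1 nth_cat size_tuple.
have h2 : (n + i - l < n) = false by apply/negbTE; rewrite -leqNgt; lia.
have h3 : (n + i - l - n < r) by have := ltn_ord i; lia.
by rewrite h2 nth_nseq h3.
Qed.

Lemma sem_per n (x : n.-tuple S) :
  run (RG f PeriodicB) (val (global_map f PeriodicB x)) :&: rgacc (RG f PeriodicB) != set0.
Proof.
pose z := fun j : nat => nth ord0 x (absz ((j%:Z - l%:Z) %% n%:Z)%Z).
have -> : val (global_map f PeriodicB x) = map (fun j => f (win1 z j)) (iota 0 n).
  by rewrite val_gm.
apply/set0Pn; exists (win z 0, win z n); rewrite inE; apply/andP; split.
  by apply: run_per.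
rewrite inE /=; apply/eqP; apply: eq_mktuple => p.
by rewrite /z add0n PoszD -GRing.addrA modzDl.
Qed.
End Sem.

Lemma sem_all (s1 l r : nat) (f : (l + r).+1.-tuple 'I_s1.+1 -> 'I_s1.+1) b n
  (x : n.-tuple 'I_s1.+1) :
  run (RG f b) (val (global_map f b x)) :&: rgacc (RG f b) != set0.
Proof. by case: b; [apply: sem_null | apply: sem_per]. Qed.

Theorem theorem4 (s1 l r : nat) (f : (l + r).+1.-tuple 'I_s1.+1 -> 'I_s1.+1)
  (b : boundary) (hm : 0 < l + r)
  (N : {set rgX (RG f b)}) (k : nat)
  (t : nat) (C : 'I_t -> seq ({set rgX (RG f b)} * 'I_s1.+1)) (x : 'I_t -> nat) :
  is_vertex N -> negative N -> has_value N k -> 1 <= k ->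
  (forall j, is_circuit (C j)) ->
  (forall j j', j != j' -> ~ same_circuit (C j) (C j')) ->
  (forall j, 0 < x j ->
     exists p : seq 'I_t,
       [/\ path (fun i i' => circ_adj (C i) (C i')) j p,
           all (fun i => 0 < x i) (j :: p) &
           passes_through (C (last j p)) N]) ->
  ~ reversible f b (k + \sum_(j < t) x j * size (C j)).
Proof.
move=> _ hneg [[w0 [hw0 hrun]] _] _ hcirc _ hconn hrev.
have hcyc : forall j, cycle (fun a b0 : {set rgX (RG f b)} * 'I_s1.+1 =>
    rgdelta a.1 a.2 == b0.1) (C j) by move=> j; case: (hcirc j).
have [u [hu1 hu2]] := closed_walk hcyc hconn.
have szw : size (w0 ++ u) == k + \sum_(j < t) x j * size (C j).
  by rewrite size_cat hw0 hu2.
pose tw := Tuple szw.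
case: hrev => g hg1 hg2.
have := sem_all f b (g tw); rewrite hg2 /= /run foldl_cat.
rewrite -/(run (RG f b) w0) hrun hu1.
by move: hneg; rewrite /negative => ->; rewrite eqxx.
Qed.
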